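(* Let $k$ be a number field, $\mathbf{G}$ a linear $k$--algebraic group, and $\mathbf{H}$ a closed $k$--algebraic subgroup of $\mathbf{G}$ such that every finite index subgroup of $\mathbf{H}(\mathcal{O}_k)$ is a congruence subgroup. Then a subgroup of $\mathbf{H}(\mathcal{O}_k)$ is separable in $\mathbf{H}(\mathcal{O}_k)$ if and only if it is separable in $\mathbf{G}(\mathcal{O}_k)$.
   Context: A linear $k$--algebraic group is a Zariski closed subgroup $\mathbf{G}\subseteq\mathrm{GL}(m;\bar k)$ whose ideal of vanishing is generated over $k$; for $\mathbf{H}\subseteq\mathbf{G}$ write $\mathbf{H}(\mathcal{O}_k)=\mathbf{H}\cap\mathrm{GL}(m;\mathcal{O}_k)$, where $\mathcal{O}_k$ is the ring of integers. For an ideal $\mathfrak{b}$ of $\mathcal{O}_k$, the kernel of the reduction map $\mathbf{H}(\mathcal{O}_k)\to\mathbf{H}(\mathcal{O}_k/\mathfrak{b})$ is a principal congruence subgroup; a congruence subgroup is a subgroup of $\mathbf{H}(\mathcal{O}_k)$ containing some principal congruence subgroup. A subgroup $H$ of a group $G$ is separable if for every $g\in G\setminus H$ there is a finite index subgroup of $G$ containing $H$ but not $g$. *)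

(* Defs.v *)
From HB Require Import structures.
From mathcomp Require Import all_boot all_order all_algebra all_field.
From mathcomp Require Import mpoly.
Set Implicit Arguments. Unset Strict Implicit. Unset Printing Implicit Defensive.
Import Order.TTheory GRing.Theory Num.Theory.
Local Open Scope ring_scope.

(* A number field, realised as a subfield of algC (every number field embeds
   in algC = \bar Q; algC is then an algebraic closure of k). *)
Definition number_field (k : algC -> Prop) : Prop :=
  [/\ (k 0 /\ k 1),
      (forall x y, k x -> k y -> k (x - y)),
      (forall x y, k x -> k y -> k (x * y)),
      (forall x, k x -> k x^-1) &
      (exists (n : nat) (b : 'I_n -> algC),
        forall x, k x -> exists c : 'I_n -> rat, x = \sum_(i < n) ratr (c i) * b i)].

Definition ring_of_integers (k : algC -> Prop) (x : algC) : Prop :=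
  k x /\ x \in Aint.

Definition mset (m : nat) := 'M[algC]_m -> Prop.

Definition mxeval (m : nat) (p : {mpoly algC[m * m]}) (A : 'M[algC]_m) : algC :=
  p.@[fun i => mxvec A 0 i].

Definition is_subgroup (m : nat) (K Gam : mset m) : Prop :=
  [/\ (forall A, K A -> Gam A), K 1%:M,
      (forall A B, K A -> K B -> K (A *m B)) &
      (forall A, K A -> K (invmx A))].

Definition zariski_closed_in_GL (m : nat) (G : mset m) : Prop :=
  exists S : {mpoly algC[m * m]} -> Prop,
    forall A, G A <-> (A \in unitmx /\ forall p, S p -> mxeval p A = 0).

Definition vanishing_ideal (m : nat) (G : mset m) (p : {mpoly algC[m * m]}) : Prop :=
  forall A, G A -> mxeval p A = 0.

Definition ideal_defined_over (k : algC -> Prop) (m : nat) (G : mset m) : Prop :=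
  exists s : seq {mpoly algC[m * m]},
    [/\ (forall f, f \in s -> forall mo, k (f@_mo)),
        (forall f, f \in s -> vanishing_ideal G f) &
        (forall p, vanishing_ideal G p ->
           exists q : seq {mpoly algC[m * m]},
             p = \sum_(i < size s) q`_i * s`_i)].

Definition linear_k_group (k : algC -> Prop) (m : nat) (G : mset m) : Prop :=
  [/\ is_subgroup G (fun A => A \in unitmx), zariski_closed_in_GL G &
      ideal_defined_over k G].

Definition GL_Ok (k : algC -> Prop) (m : nat) (A : 'M[algC]_m) : Prop :=
  [/\ A \in unitmx, (forall i j, ring_of_integers k (A i j)) &
      (forall i j, ring_of_integers k (invmx A i j))].

Definition int_points (k : algC -> Prop) (m : nat) (H : mset m) : mset m :=
  fun A => H A /\ GL_Ok k A.

Definition Ok_ideal (k : algC -> Prop) (b : algC -> Prop) : Prop :=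
  [/\ (forall x, b x -> ring_of_integers k x), b 0,
      (forall x y, b x -> b y -> b (x + y)) &
      (forall r x, ring_of_integers k r -> b x -> b (r * x))].

Definition principal_congruence (k : algC -> Prop) (m : nat) (H : mset m)
    (b : algC -> Prop) : mset m :=
  fun A => int_points k H A /\ forall i j, b ((A - 1%:M) i j).

Definition congruence_subgroup (k : algC -> Prop) (m : nat) (H : mset m)
    (K : mset m) : Prop :=
  is_subgroup K (int_points k H) /\
  exists b, [/\ Ok_ideal k b, (exists x, b x /\ x <> 0) &
             (forall A, principal_congruence k H b A -> K A)].

Definition finite_index_subgroup (m : nat) (K Gam : mset m) : Prop :=
  is_subgroup K Gam /\
  exists s : seq 'M[algC]_m, (forall h, h \in s -> Gam h) /\
    forall g, Gam g -> exists2 h, h \in s & K (invmx h *m g).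

Definition separable_in (m : nat) (Lam Gam : mset m) : Prop :=
  forall g, Gam g -> ~ Lam g ->
    exists K, [/\ finite_index_subgroup K Gam, (forall A, Lam A -> K A) & ~ K g].

(* Main.v *)
Require Import Defs.
From HB Require Import structures.
From mathcomp Require Import all_boot all_order all_algebra all_field.
From mathcomp Require Import mpoly.
From mathcomp Require Import ring zify.
From Stdlib Require Import ClassicalEpsilon Classical.
Set Implicit Arguments. Unset Strict Implicit. Unset Printing Implicit Defensive.
Import Order.TTheory GRing.Theory Num.Theory.
Local Open Scope ring_scope.


Lemma k_sub k : number_field k -> forall x y, k x -> k y -> k (x - y).
Proof. by case. Qed.
Lemma k_mul k : number_field k -> forall x y, k x -> k y -> k (x * y).
Proof. by case. Qed.
Lemma k0 k : number_field k -> k 0. Proof. by case=> -[]. Qed.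
Lemma k1 k : number_field k -> k 1. Proof. by case=> -[]. Qed.
Lemma k_opp k : number_field k -> forall x, k x -> k (- x).
Proof. move=> hk x kx; rewrite -sub0r; apply: k_sub => //; exact: k0. Qed.
Lemma k_add k : number_field k -> forall x y, k x -> k y -> k (x + y).
Proof. move=> hk x y kx ky; rewrite -[y]opprK; apply: k_sub => //; exact: k_opp. Qed.
Lemma k_nat k : number_field k -> forall n : nat, k n%:R.
Proof. move=> hk; elim=> [|n IH]; first exact: k0. rewrite mulrS; apply: k_add => //; exact: k1. Qed.
Lemma k_int k : number_field k -> forall z : int, k z%:~R.
Proof. move=> hk [n|n]; first exact: k_nat. rewrite NegzE mulrNz; apply: k_opp => //; exact: k_nat. Qed.

Definition O k x := ring_of_integers k x.
Lemma O_sub k : number_field k -> forall x y, O k x -> O k y -> O k (x - y).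
Proof. move=> hk x y [kx ax] [ky ay]; split; [exact: k_sub | exact: rpredB]. Qed.
Lemma O_add k : number_field k -> forall x y, O k x -> O k y -> O k (x + y).
Proof. move=> hk x y [kx ax] [ky ay]; split; [exact: k_add | exact: rpredD]. Qed.
Lemma O_mul k : number_field k -> forall x y, O k x -> O k y -> O k (x * y).
Proof. move=> hk x y [kx ax] [ky ay]; split; [exact: k_mul | exact: rpredM]. Qed.
Lemma O_opp k : number_field k -> forall x, O k x -> O k (- x).
Proof. move=> hk x [kx ax]; split; [exact: k_opp | by rewrite -sub0r rpredB]. Qed.
Lemma O_int k : number_field k -> forall z : int, O k z%:~R.
Proof. move=> hk z; split; [exact: k_int | exact: Aint_int]. Qed.
Lemma O_nat k : number_field k -> forall n : nat, O k n%:R.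
Proof. move=> hk n; exact: (O_int hk n). Qed.
Lemma O0 k : number_field k -> O k 0. Proof. move=> hk; exact: (O_nat hk 0). Qed.
Lemma O1 k : number_field k -> O k 1. Proof. move=> hk; exact: (O_nat hk 1). Qed.
Lemma O_sum k : number_field k -> forall (I : Type) (r : seq I) (P : pred I) (F : I -> algC),
  (forall i, P i -> O k (F i)) -> O k (\sum_(i <- r | P i) F i).
Proof. move=> hk I r P F H; apply: big_ind => //; [exact: O0 | exact: O_add]. Qed.
Lemma O_prod k : number_field k -> forall (I : Type) (r : seq I) (P : pred I) (F : I -> algC),
  (forall i, P i -> O k (F i)) -> O k (\prod_(i <- r | P i) F i).
Proof. move=> hk I r P F H; apply: big_ind => //; [exact: O1 | exact: O_mul]. Qed.
Lemma O_exp k : number_field k -> forall x n, O k x -> O k (x ^+ n).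
Proof. move=> hk x n Ox; elim: n => [|n IH]; [exact: O1| rewrite exprS; exact: O_mul]. Qed.


Lemma dep k : number_field k -> exists n : nat, forall r (e : 'I_r -> algC),
  (n < r)%N -> (forall j, k (e j)) ->
  exists a : 'I_r -> int, (exists j, a j != 0) /\ \sum_j (a j)%:~R * e j = 0.
Proof.
case=> _ _ _ _ [n [b span]]; exists n => r e ltnr ke.
pose C j i := proj1_sig (constructive_indefinite_description _ (span (e j) (ke j))) i.
have hC j : e j = \sum_i ratr (C j i) * b i.
  by rewrite /C; case: (constructive_indefinite_description _ _).
pose M : 'M[rat]_(r, n) := \matrix_(j, i) C j i.
have : kermx M != 0.
  rewrite kermx_eq0 /row_free; apply/negP => /eqP h.
  by move: (rank_leq_col M); rewrite h leqNgt ltnr.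
case/matrix0Pn => i0 [j0 nz].
pose v j := kermx M i0 j.
have hv : forall i, \sum_j v j * C j i = 0.
  move=> i; have h0 : (kermx M *m M) i0 i = 0 by rewrite mulmx_ker mxE.
  apply: etrans h0; rewrite [RHS]mxE; apply: eq_bigr => j _.
  by rewrite [M j i]mxE.
have hsum : \sum_j ratr (v j) * e j = 0 :> algC.
  under eq_bigr do rewrite hC mulr_sumr.
  rewrite exchange_big /= big1 // => i1 _.
  transitivity (ratr (\sum_j v j * C j i1) * b i1).
    rewrite rmorph_sum mulr_suml; apply: eq_bigr => j _.
    by rewrite rmorphM mulrA.
  by rewrite hv rmorph0 mul0r.
pose d := \prod_j denq (v j).
exists (fun j => numq (v j) * \prod_(l | l != j) denq (v l)).
have ha j : ((numq (v j) * \prod_(l | l != j) denq (v l))%:~R : rat) = v j * d%:~R.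
  rewrite /d [in RHS](bigD1 j) //= !rmorphM /= numqE -mulrA.
  by [].
split.
  exists j0; apply/negP => /eqP h; move: (ha j0); rewrite h => /esym /eqP.
  rewrite mulf_eq0 (negPf nz) /= intr_eq0 /d prodf_seq_eq0.
  by case/hasP => l _ /=; rewrite (negPf (denq_neq0 _)).
transitivity (ratr (d%:~R) * \sum_j ratr (v j) * e j); last by rewrite hsum mulr0.
rewrite mulr_sumr; apply: eq_bigr => j _.
rewrite -(rmorph_int (ratr : rat -> algC)) ha rmorphM /=.
by rewrite mulrA [ratr (v j) * _]mulrC.
Qed.


Lemma dep_p k : number_field k -> exists n : nat, forall p, prime p ->
  forall r (e : 'I_r -> algC), (n < r)%N -> (forall j, k (e j)) ->
  exists a : 'I_r -> int, (exists j, ~~ (p%:Z %| a j)%Z) /\ \sum_j (a j)%:~R * e j = 0.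
Proof.
move=> hk; have [n Hn] := dep hk; exists n => p pp r e ltr ke.
have [a [[j0 nz] s0]] := Hn r e ltr ke.
move: (leqnn (\sum_j `|a j|)%N); move: {2}(\sum_j `|a j|)%N => N.
elim: N a j0 nz s0 => [|N IH] a j0 nz s0 hle.
  move: hle; rewrite (bigD1 j0) //= leqn0 addn_eq0 absz_eq0 => /andP [h _].
  by rewrite h in nz.
case: (classic (exists j, ~~ (p%:Z %| a j)%Z)) => [h|h]; first by exists a.
have hd j : (p%:Z %| a j)%Z.
  by apply/negPn/negP => hn; apply: h; exists j.
pose a' j := (a j %/ p)%Z.
have ha' j : a j = a' j * p by rewrite /a' divzK.
have p0 : (p%:R : algC) != 0 by rewrite pnatr_eq0 -lt0n prime_gt0.
apply: (IH a' j0).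
- by apply/negP => /eqP h0; move: nz; rewrite ha' h0 mul0r eqxx.
- apply/eqP; rewrite -(mulIr_eq0 _ (mulIf p0)); apply/eqP; rewrite -[RHS]s0 mulr_suml.
  by apply: eq_bigr => j _; rewrite ha' intrM -mulrA [(p%:~R) * _]mulrC mulrA.
- have hs : (\sum_j `|a j| = (\sum_j `|a' j|) * p)%N.
    rewrite big_distrl /=; apply: eq_bigr => j _; by rewrite ha' abszM absz_nat.
  have hpos : (0 < \sum_j `|a' j|)%N.
    rewrite (bigD1 j0) //= ltn_addr // absz_gt0; apply/negP => /eqP h0.
    by move: nz; rewrite ha' h0 mul0r eqxx.
  have p2 := prime_gt1 pp.
  move: hle; rewrite hs; set s := (\sum_j `|a' j|)%N => hle.
  nia.
Qed.

Definition indep k (p r : nat) (e : 'I_r -> algC) :=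
  forall a : 'I_r -> int,
    (exists y, O k y /\ \sum_j (a j)%:~R * e j = p%:R * y) -> forall j, (p%:Z %| a j)%Z.


Lemma Fin_p k : number_field k -> forall p, prime p ->
  exists R : seq algC, (forall r, r \in R -> O k r) /\
    forall x, O k x -> exists2 r, r \in R & exists y, O k y /\ x = r + p%:R * y.
Proof.
move=> hk p pp; have [n Hn] := dep_p hk.
have bound : forall r (e : 'I_r -> algC), (forall j, O k (e j)) -> indep k p e -> (r <= n)%N.
  move=> r e.
  move=> Oe ind; rewrite leqNgt; apply/negP => ltr.
  have [a [[j nd] s0]] := Hn p pp r e ltr (fun j => (Oe j).1).
  move: nd; rewrite (ind a) //; exists 0; split; [exact: O0 | by rewrite s0 mulr0].
pose P t := exists e : 'I_t -> algC, (forall j, O k (e j)) /\ indep k p e.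
pose Pb t := if excluded_middle_informative (P t) then true else false.
have PbP t : Pb t -> P t by rewrite /Pb; case: excluded_middle_informative.
have PPb t : P t -> Pb t by rewrite /Pb; case: excluded_middle_informative.
have ex : exists t, Pb t.
  exists 0%N; apply: PPb; exists (fun _ => 0); split; first by case.
  by move=> a _ [].
have bd t : Pb t -> (t <= n)%N by move=> /PbP [e [Oe ind]]; exact: bound Oe ind.
case: (ex_maxnP ex bd) => t /PbP [e [Oe ind]] tmax.
pose F (w : {ffun 'I_t -> 'I_p}) := \sum_(j < t) ((w j : nat)%:R * e j).
exists (codom F); split.
  move=> r /codomP [w ->]; apply: O_sum => // j _; apply: O_mul => //; exact: O_nat.
move=> x Ox.
pose e' : 'I_t.+1 -> algC := fun j => if unlift ord0 j is Some i then e i else x.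
have notind : ~ indep k p e'.
  move=> ind'; have : Pb t.+1.
    by apply: PPb; exists e'; split => // j; rewrite /e'; case: unlift.
  by move/tmax; rewrite ltnn.
have [a [[y [Oy hs]] [j nd]]] : exists a : 'I_t.+1 -> int,
    (exists y, O k y /\ \sum_j (a j)%:~R * e' j = p%:R * y) /\ exists j, ~~ (p%:Z %| a j)%Z.
  apply: NNPP => H; apply: notind => a Ha j; apply/negPn/negP => nd; apply: H.
  by exists a; split => //; exists j.
move: hs; rewrite big_ord_recl /e' unlift_none.
under eq_bigr do rewrite liftK.
set S := \sum_(i < t) _ => hs.
pose a0 := a ord0.
have nd0 : ~~ (p%:Z %| a0)%Z.
  apply/negP => d0; have [c hc] := dvdzP d0.
  have allb i : (p%:Z %| a (lift ord0 i))%Z.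
    apply: (ind (fun i => a (lift ord0 i))); exists (y - c%:~R * x); split.
      by apply: O_sub => //; apply: O_mul => //; exact: O_int.
    change (S = p%:R * (y - c%:~R * x)).
    have -> : S = p%:R * y - a0%:~R * x by rewrite -hs; ring.
    by rewrite hc intrM; ring.
  by move: nd; case: (unliftP ord0 j) => [i ->|->]; [rewrite allb | rewrite d0].
have [u [v huv]] := Bezoutz a0 p.
have g1 : gcdz a0 p = 1.
  rewrite /gcdz absz_nat gcdnC; apply/eqP; rewrite eqz_nat.
  by rewrite -/(coprime _ _) prime_coprime // -(absz_nat p) -dvdzE.
rewrite g1 in huv.
pose z i := - u * a (lift ord0 i).
have pz : p%:Z != 0 by rewrite eqz_nat -lt0n prime_gt0.
have hw i : (`|(z i %% p)%Z| < p)%N.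
  rewrite -ltz_nat gez0_abs ?modz_ge0 //.
  by move: (ltz_mod (z i) pz); rewrite ger0_norm.
pose W : {ffun 'I_t -> 'I_p} := [ffun i => Ordinal (hw i)].
exists (F W); first exact: codom_f.
exists (u%:~R * y + v%:~R * x + \sum_i ((z i %/ p)%Z)%:~R * e i); split.
  apply: O_add => //; last by apply: O_sum => // i _; apply: O_mul => //; exact: O_int.
  by apply: O_add => //; apply: O_mul => //; exact: O_int.
have hz i : ((z i)%:~R : algC) = ((z i %/ p)%Z)%:~R * p%:R + (W i : nat)%:R.
  rewrite ffunE /= {1}(divz_eq (z i) p) rmorphD rmorphM /=; congr (_ + _).
  by rewrite -[in LHS](gez0_abs (modz_ge0 _ pz)).
have hW : F W = - u%:~R * S - p%:R * \sum_i ((z i %/ p)%Z)%:~R * e i.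
  rewrite /F /S mulr_sumr mulr_sumr -sumrB; apply: eq_bigr => i _.
  have hzu : ((z i)%:~R : algC) = - u%:~R * (a (lift ord0 i))%:~R.
    by rewrite /z intrM rmorphN.
  have -> : ((W i : nat)%:R : algC) = - u%:~R * (a (lift ord0 i))%:~R - ((z i %/ p)%Z)%:~R * p%:R.
    by rewrite -hzu hz; ring.
  ring.
have huvC : (u%:~R * a0%:~R + v%:~R * p%:R : algC) = 1.
  by rewrite -[p%:R]/(p%:Z%:~R) -!intrM -rmorphD /= huv.
rewrite hW; have -> : S = p%:R * y - a0%:~R * x by rewrite -hs; ring.
transitivity ((u%:~R * a0%:~R + v%:~R * p%:R) * x); first by rewrite huvC mul1r.
ring.
Qed.


Lemma Fin k : number_field k -> forall N, (0 < N)%N ->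
  exists R : seq algC, (forall r, r \in R -> O k r) /\
    forall x, O k x -> exists2 r, r \in R & exists y, O k y /\ x = r + N%:R * y.
Proof.
move=> hk N; elim/ltn_ind: N => N IH N0.
case: (leqP N 1) => [N1 | N1].
  have -> : N = 1%N by apply/eqP; rewrite eqn_leq N1 N0.
  exists [:: 0]; split; first by move=> r; rewrite inE => /eqP ->; exact: O0.
  by move=> x Ox; exists 0; rewrite ?inE //; exists x; split => //; rewrite add0r mul1r.
have pp := pdiv_prime N1; set p := pdiv N in pp.
have pN : (p %| N)%N by exact: pdiv_dvd.
have p1 := prime_gt1 pp.
have MN : (N %/ p < N)%N by apply: ltn_Pdiv.
have M0 : (0 < N %/ p)%N by rewrite divn_gt0 ?prime_gt0 // pdiv_leq.
have [RM [ORM HM]] := IH _ MN M0.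
have [Rp [ORp Hp]] := Fin_p hk pp.
exists [seq r + (N %/ p)%:R * s | r <- RM, s <- Rp]; split.
  move=> r /allpairsP [[r1 s1] [/= h1 h2 ->]].
  by apply: O_add; [| exact: ORM | apply: O_mul; [| exact: O_nat | exact: ORp]].
move=> x Ox; have [r hr [y [Oy hx]]] := HM x Ox.
have [s hs [z [Oz hy]]] := Hp y Oy.
exists (r + (N %/ p)%:R * s); first by apply/allpairsP; exists (r, s).
exists z; split => //; rewrite hx hy -{3}(divnK pN) natrM; ring.
Qed.


Lemma k_exp k : number_field k -> forall x n, k x -> k (x ^+ n).
Proof. move=> hk x n kx; elim: n => [|n IH]; [exact: k1 | rewrite exprS; exact: k_mul]. Qed.

Lemma poly_of k : number_field k -> forall c, k c ->
  exists q : {poly algC}, [/\ q != 0, q \is a polyOver Num.int & q.[c] = 0].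
Proof.
move=> hk c kc; have [n Hn] := dep hk.
have [a [[j0 nz] s0]] := Hn n.+1 (fun j => c ^+ j) (ltnSn n) (fun j => k_exp hk j kc).
exists (\poly_(i < n.+1) (a (inord i))%:~R); split.
- apply/eqP => q0; have := congr1 (fun p : {poly algC} => p`_j0) q0.
  by rewrite coef_poly ltn_ord inord_val coef0 => /eqP; rewrite intr_eq0 (negPf nz).
- by apply/polyOver_poly => i _; exact: rpred_int.
- by rewrite horner_poly; apply: etrans s0; apply: eq_bigr => i _; rewrite inord_val.
Qed.

Lemma Opoly k : number_field k -> forall (q : {poly algC}) c,
  q \is a polyOver Num.int -> O k c -> O k q.[c].
Proof.
move=> hk q c /polyOverP qi Oc; rewrite horner_coef; apply: O_sum => // i _.
apply: O_mul => //; last exact: O_exp.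
by have /intrP [m ->] := qi i; exact: O_int.
Qed.

Lemma int_in_ideal k : number_field k -> forall c, O k c -> c != 0 ->
  exists N : int, N != 0 /\ exists y, O k y /\ N%:~R = c * y.
Proof.
move=> hk c Oc c0; have [q [q0 qZ qc]] := poly_of hk Oc.1.
move: {2}(size q) (leqnn (size q)) => s.
elim: s q q0 qZ qc => [|s IH] q q0 qZ qc hs.
  by move: q0; rewrite -size_poly_eq0; move: hs; rewrite leqn0 => ->.
have hq : q = (q`_0)%:P + drop_poly 1 q * 'X.
  rewrite -[LHS](poly_take_drop 1) expr1; congr (_ + _).
  by apply/polyP => i; rewrite coef_take_poly coefC; case: i.
have dZ : drop_poly 1 q \is a polyOver Num.int.
  by apply/polyOverP => i; rewrite coef_drop_poly; move/polyOverP: qZ.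
case: (eqVneq (q`_0) 0) => [z0 | nz0].
  apply: (IH (drop_poly 1 q)) => //.
  - apply/eqP => d0; move: q0; by rewrite hq z0 d0 mul0r polyC0 add0r eqxx.
  - move: qc; rewrite {1}hq z0 polyC0 add0r hornerMX => /eqP; rewrite mulf_eq0 (negPf c0) orbF.
    by move/eqP.
  - by rewrite size_drop_poly; move: hs; rewrite subn1; case: (size q).
have /intrP [N hN] : q`_0 \is a Num.int by move/polyOverP: qZ.
exists N; split; first by apply/eqP => N0; move: nz0; rewrite hN N0 eqxx.
exists (- (drop_poly 1 q).[c]); split; first by apply: O_opp => //; exact: Opoly.
move: qc; rewrite {1}hq hornerD hornerC hornerMX -hN => /eqP.
by rewrite addr_eq0 => /eqP ->; rewrite mulrN mulrC.
Qed.

Lemma denom k : number_field k -> forall y, k y ->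
  exists d : int, d != 0 /\ O k (d%:~R * y).
Proof.
move=> hk y ky; have [q [q0 qZ qy]] := poly_of hk ky.
have /intrP [d hd] : lead_coef q \is a Num.int by rewrite /lead_coef; move/polyOverP: qZ.
exists d; split.
  by apply/eqP => d0; move: q0; rewrite -lead_coef_eq0 hd d0 eqxx.
split; first by apply: k_mul => //; exact: k_int.
case hs : (size q) => [|[|t]].
- by move: q0; rewrite -size_poly_eq0 hs.
- move: qy; rewrite horner_coef hs big_ord1 expr0 mulr1 => q00.
  by move: q0; rewrite -lead_coef_eq0 /lead_coef hs q00 eqxx.
pose l : algC := lead_coef q.
pose r : {poly algC} := 'X^(t.+1) + \poly_(i < t.+1) (q`_i * l ^+ (t - i)).
apply: (@root_monic_Aint r).
- rewrite /root /r hornerD hornerXn horner_poly.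
  have -> : \sum_(i < t.+1) q`_i * l ^+ (t - i) * (d%:~R * y) ^+ i
       = l ^+ t * \sum_(i < t.+1) q`_i * y ^+ i.
    rewrite mulr_sumr; apply: eq_bigr => i _.
    rewrite -hd -/l exprMn.
    have -> : l ^+ t = l ^+ (t - i) * l ^+ i by rewrite -exprD subnK // -ltnS.
    ring.
  move: qy; rewrite horner_coef hs big_ord_recr /= => qy.
  have -> : \sum_(i < t.+1) q`_i * y ^+ i = - (q`_t.+1 * y ^+ t.+1).
    by apply/eqP; rewrite -addr_eq0 qy.
  have -> : q`_t.+1 = l by rewrite /l /lead_coef hs.
  by rewrite -hd -/l exprMn exprS; apply/eqP; ring.
- rewrite /r monicE lead_coefDl ?lead_coefXn // size_polyXn.
  by apply: leq_ltn_trans (size_poly _ _) _.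
- apply/polyOverP => i; rewrite /r coefD coefXn coef_poly.
  move/polyOverP: qZ => qZ.
  have lZ : l \is a Num.int by rewrite /l /lead_coef qZ.
  apply: rpredD; first by case: (i == t.+1); [exact: rpred1 | exact: rpred0].
  by case: (i < t.+1)%N; [apply: rpredM; [exact: qZ | exact: rpredX] | exact: rpred0].
Qed.


Lemma invmxM' m (A B : 'M[algC]_m) : A \in unitmx -> B \in unitmx ->
  invmx (A *m B) = invmx B *m invmx A.
Proof.
move=> uA uB; have uAB : A *m B \in unitmx by rewrite unitmx_mul uA.
have h1 : (A *m B) *m (invmx B *m invmx A) = 1%:M.
  by rewrite mulmxA -(mulmxA A) (mulmxV uB) mulmx1 mulmxV.
by rewrite -[LHS]mulmx1 -h1 mulmxA mulVmx // mul1mx.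
Qed.

Lemma mxBE m (A B : 'M[algC]_m) i j : (A - B) i j = A i j - B i j.
Proof. by rewrite !mxE. Qed.

Lemma GL_Ok_mul k : number_field k -> forall m (A B : 'M[algC]_m),
  GL_Ok k A -> GL_Ok k B -> GL_Ok k (A *m B).
Proof.
move=> hk m A B [uA OA OiA] [uB OB OiB]; split.
- by rewrite unitmx_mul uA.
- move=> i j; rewrite mxE; apply: O_sum => // l _; exact: (O_mul hk (OA i l) (OB l j)).
- move=> i j; rewrite invmxM' // mxE; apply: O_sum => // l _; exact: (O_mul hk (OiB i l) (OiA l j)).
Qed.

Lemma GL_Ok_inv k : number_field k -> forall m (A : 'M[algC]_m),
  GL_Ok k A -> GL_Ok k (invmx A).
Proof.
move=> hk m A [uA OA OiA]; split => //; first by rewrite unitmx_inv.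
by move=> i j; rewrite invmxK.
Qed.

Lemma GL_Ok_1 k : number_field k -> forall m, GL_Ok k (1%:M : 'M[algC]_m).
Proof.
move=> hk m; split; first exact: unitmx1.
- by move=> i j; rewrite mxE; exact: O_nat.
- by move=> i j; rewrite invmx1 mxE; exact: O_nat.
Qed.

Lemma int_points_subgroup k : number_field k -> forall m (G : mset m),
  is_subgroup G (fun A => A \in unitmx) ->
  is_subgroup (int_points k G) (int_points k G).
Proof.
move=> hk m G [_ G1 GM GV]; split => //.
- by split; [exact: G1 | exact: GL_Ok_1].
- by move=> A B [GA OA] [GB OB]; split; [exact: GM | exact: GL_Ok_mul].
- by move=> A [GA OA]; split; [exact: GV | exact: GL_Ok_inv].
Qed.

Lemma bO k b : Ok_ideal k b -> forall x, b x -> O k x. Proof. by case. Qed.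
Lemma b0 k b : Ok_ideal k b -> b 0. Proof. by case. Qed.
Lemma bD k b : Ok_ideal k b -> forall x y, b x -> b y -> b (x + y). Proof. by case. Qed.
Lemma bM k b : Ok_ideal k b -> forall r x, O k r -> b x -> b (r * x). Proof. by case. Qed.
Lemma bMr k b : Ok_ideal k b -> forall r x, O k r -> b x -> b (x * r).
Proof. move=> hb r x Or bx; rewrite mulrC; exact: (bM hb). Qed.
Lemma bN k b : number_field k -> Ok_ideal k b -> forall x, b x -> b (- x).
Proof. move=> hk hb x bx; rewrite -mulN1r; exact: (bM hb (O_opp hk (O1 hk)) bx). Qed.
Lemma bB k b : number_field k -> Ok_ideal k b -> forall x y, b x -> b y -> b (x - y).
Proof. move=> hk hb x y bx by'; exact: (bD hb bx (bN hk hb by')). Qed.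
Lemma b_sum k b : Ok_ideal k b -> forall (I : Type) (r : seq I) (P : pred I) (F : I -> algC),
  (forall i, P i -> b (F i)) -> b (\sum_(i <- r | P i) F i).
Proof. move=> hb I r P F H; apply: big_ind => //; [exact: b0 hb | exact: bD hb]. Qed.

Definition Oent k m (A : 'M[algC]_m) := forall i j, O k (A i j).
Definition eqmod m (b : algC -> Prop) (A B : 'M[algC]_m) := forall i j, b ((A - B) i j).

Lemma eqmod_refl k b m (A : 'M[algC]_m) : Ok_ideal k b -> eqmod b A A.
Proof. by move=> hb i j; rewrite subrr mxE; exact: b0 hb. Qed.

Lemma eqmod_sym k b m (A B : 'M[algC]_m) : number_field k -> Ok_ideal k b ->
  eqmod b A B -> eqmod b B A.
Proof. move=> hk hb h i j; rewrite -opprB mxE; exact: (bN hk hb (h i j)). Qed.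

Lemma eqmod_trans k b m (A B C : 'M[algC]_m) : Ok_ideal k b ->
  eqmod b A B -> eqmod b B C -> eqmod b A C.
Proof.
move=> hb h1 h2 i j; have -> : A - C = (A - B) + (B - C) by rewrite addrA subrK.
rewrite mxE; exact: (bD hb (h1 i j) (h2 i j)).
Qed.

Lemma eqmod_mul k b m (A A' B B' : 'M[algC]_m) : number_field k -> Ok_ideal k b ->
  Oent k A' -> Oent k B -> eqmod b A A' -> eqmod b B B' -> eqmod b (A *m B) (A' *m B').
Proof.
move=> hk hb OA' OB h1 h2 i j; rewrite mxBE !mxE -sumrB; apply: (b_sum hb) => l _.
have -> : A i l * B l j - A' i l * B' l j = (A - A') i l * B l j + A' i l * (B - B') l j.
  by rewrite !mxBE; ring.
exact: (bD hb (bMr hb (OB l j) (h1 i l)) (bM hb (OA' i l) (h2 l j))).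
Qed.


Lemma MatFin k : number_field k -> forall b m (N : nat), (0 < N)%N -> Ok_ideal k b ->
  (forall y, O k y -> b (N%:R * y)) ->
  exists RM : seq 'M[algC]_m, forall A, Oent k A -> exists2 B, B \in RM & eqmod b A B.
Proof.
move=> hk b m N N0 hb hN.
have [R [OR HR]] := Fin hk N0.
pose Mf (f : {ffun 'I_m * 'I_m -> 'I_(size R)}) : 'M[algC]_m :=
  \matrix_(i, j) nth 0 R (f (i, j)).
exists (codom Mf) => A OA.
have H : forall ij : 'I_m * 'I_m, exists t : 'I_(size R), b (A ij.1 ij.2 - nth 0 R t).
  move=> [i j]; have [r rR [y [Oy hy]]] := HR _ (OA i j).
  have ir : (index r R < size R)%N by rewrite index_mem.
  exists (Ordinal ir); rewrite /= nth_index // hy addrAC subrr add0r; exact: hN.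
pose f := [ffun ij => proj1_sig (constructive_indefinite_description _ (H ij))].
exists (Mf f); first exact: codom_f.
move=> i j; rewrite mxBE mxE ffunE.
by case: constructive_indefinite_description.
Qed.

Definition congr_lift k m (G : mset m) (b : algC -> Prop) (P : mset m) : mset m :=
  fun A => int_points k G A /\ exists2 h, P h & eqmod b A h.

Lemma Lift k : number_field k -> forall m (G : mset m) b (N : nat) (P : mset m),
  is_subgroup G (fun A => A \in unitmx) -> (0 < N)%N -> Ok_ideal k b ->
  (forall y, O k y -> b (N%:R * y)) ->
  is_subgroup P (int_points k G) ->
  finite_index_subgroup (congr_lift k G b P) (int_points k G) /\ (forall A, P A -> congr_lift k G b P A).
Proof.
move=> hk m G b N P sG N0 hb hN sP.
have [_ G1 GM GV] := int_points_subgroup hk sG.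
have [PG P1 PM PV] := sP.
have Oe A : int_points k G A -> Oent k A by case=> _ [].
have Oi A : int_points k G A -> Oent k (invmx A) by case=> _ [].
have uA A : int_points k G A -> A \in unitmx by case=> _ [].
split; last first.
  by move=> A PA; split; [exact: PG | exists A => //; exact: eqmod_refl hb].
split; first split.
- by move=> A [].
- by split => //; exists 1%:M => //; exact: eqmod_refl hb.
- move=> A B [GA [h Ph eA]] [GB [h' Ph' eB]]; split; first exact: GM.
  exists (h *m h'); first exact: PM.
  by apply: (eqmod_mul hk hb) => //; [exact: Oe _ (PG _ Ph) | exact: Oe].
- move=> A [GA [h Ph eA]]; split; first exact: GV.
  exists (invmx h); first exact: PV.
  have Gh := PG _ Ph.
  apply: (eqmod_sym hk hb).
  have e1 : eqmod b (invmx A *m A *m invmx h) (invmx A *m h *m invmx h).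
    apply: (eqmod_mul hk hb) => //; first by apply: Oe; apply: GM => //; exact: GV.
      exact: Oi.
    apply: (eqmod_mul hk hb) => //; [exact: Oi | exact: Oe | exact: eqmod_refl hb].
    exact: eqmod_refl hb.
  by move: e1; rewrite mulVmx ?uA // mul1mx -mulmxA mulmxV ?uA // mulmx1.
have [RM HRM] := MatFin hk m N0 hb hN.
have [s [sGl hs]] : exists s : seq 'M_m, (forall h, h \in s -> int_points k G h) /\
    forall B, B \in RM -> (exists A, int_points k G A /\ eqmod b A B) ->
      exists2 A, A \in s & eqmod b A B.
  elim: RM {HRM} => [|B0 RM [s [sG1 hs]]]; first by exists [::]; split.
  case: (classic (exists A, int_points k G A /\ eqmod b A B0)) => [[A0 [GA0 eA0]]|nex].
    exists (A0 :: s); split.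
      by move=> h; rewrite inE => /predU1P [->|]; [| exact: sG1].
    move=> B; rewrite inE => /predU1P [-> _|BR ex]; first by exists A0; rewrite ?inE ?eqxx.
    by have [A As eA] := hs B BR ex; exists A; rewrite ?inE ?As ?orbT.
  exists s; split => // B; rewrite inE => /predU1P [-> ex|BR ex]; first by case: (nex ex).
  exact: hs.
exists s; split => // g Gg; rename sGl into sG'.
have [B BR eB] := HRM g (Oe g Gg).
have [A As eA] : exists2 A, A \in s & eqmod b A B by apply: hs => //; exists g.
exists A => //; split; first by apply: GM => //; apply: GV; exact: sG'.
exists 1%:M => //.
have GA := sG' _ As.
have eg : eqmod b g A by apply: (eqmod_trans hb eB); exact: (eqmod_sym hk hb).
have := eqmod_mul hk hb (Oi _ GA) (Oe _ Gg) (eqmod_refl _ hb) eg.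
by rewrite mulVmx ?uA.
Qed.


Lemma O_ideal k : number_field k -> Ok_ideal k (O k).
Proof.
move=> hk; split => //; [exact: O0 | exact: O_add | move=> r x Or Ox; exact: O_mul].
Qed.

Lemma meval_cong k : number_field k -> forall b m (F : {mpoly algC[m * m]}) (A B : 'M[algC]_m),
  Ok_ideal k b -> (forall mo, O k F@_mo) -> Oent k A -> Oent k B -> eqmod b A B ->
  [/\ O k (mxeval F A), O k (mxeval F B) & b (mxeval F A - mxeval F B)].
Proof.
move=> hk b m F A B hb FO OA OB eAB.
pose Q x y := [/\ O k x, O k y & b (x - y)].
have Qadd x y x' y' : Q x x' -> Q y y' -> Q (x + y) (x' + y').
  case=> Ox Ox' bx [Oy Oy' by']; split; [exact: O_add | exact: O_add |].
  have -> : x + y - (x' + y') = (x - x') + (y - y') by ring.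
  exact: (bD hb).
have Qmul x y x' y' : Q x x' -> Q y y' -> Q (x * y) (x' * y').
  case=> Ox Ox' bx [Oy Oy' by']; split; [exact: O_mul | exact: O_mul |].
  have -> : x * y - x' * y' = (x - x') * y + x' * (y - y') by ring.
  exact: (bD hb (bMr hb Oy bx) (bM hb Ox' by')).
have Qc x : O k x -> Q x x by move=> Ox; split => //; rewrite subrr; exact: (b0 hb).
have Qexp : forall n x x', Q x x' -> Q (x ^+ n) (x' ^+ n).
  move=> n; induction n as [|n IH] => x x' qx; first by rewrite !expr0; exact: (Qc _ (O1 hk)).
  by rewrite !exprS; apply: (Qmul) => //; exact: IH.
have : Q (mxeval F A) (mxeval F B).
  rewrite /mxeval !mevalE; apply: (big_ind2 Q) => //; first exact: (Qc _ (O0 hk)).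
    by move=> *; exact: Qadd.
  move=> mo _; apply: (Qmul); first exact: (Qc).
  apply: (big_ind2 Q) => //; first exact: (Qc _ (O1 hk)).
    by move=> *; exact: Qmul.
  move=> i _; apply: (Qexp).
  case/mxvec_indexP: i => i j; rewrite !mxvecE; split; [exact: OA | exact: OB |].
  by rewrite -mxBE.
by case.
Qed.

Lemma half_notA (y : algC) : y \in Aint -> 2 * y = 1 -> False.
Proof.
move=> Ay h2.
have yr : y \in Crat.
  apply/CratP; exists (2^-1); rewrite fmorphV rmorph_nat.
  have h20 : (2 : algC) != 0 by rewrite pnatr_eq0.
  by apply: (mulfI h20); rewrite h2 mulfV.
have /intrP [z hz] := Cint_rat_Aint yr Ay.
have : ((2 * z)%:~R : algC) = 1%:~R by rewrite intrM -hz h2.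
move/intr_inj; lia.
Qed.

Lemma denom_seq k : number_field k -> forall (T : eqType) (r : seq T) (c : T -> algC),
  (forall t, k (c t)) -> exists D : int, D != 0 /\ forall t, t \in r -> O k (D%:~R * c t).
Proof.
move=> hk T r c kc; elim: r => [|t0 r [D [D0 hD]]]; first by exists 1; split.
have [d0 [d00 hd0]] := denom hk (kc t0).
exists (d0 * D); split; first by rewrite mulf_neq0.
move=> t; rewrite inE => /predU1P [->|tr].
  by rewrite intrM mulrAC; apply: O_mul => //; exact: O_int.
by rewrite intrM -mulrA; apply: O_mul => //; [exact: O_int | exact: hD].
Qed.

Lemma absN k : number_field k -> forall b, Ok_ideal k b -> forall N : int, N != 0 -> b N%:~R ->
  (0 < `|N|)%N /\ forall z, O k z -> b (`|N|%:R * z).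
Proof.
move=> hk b hb N N0 bN; split; first by rewrite absz_gt0.
move=> z Oz.
have -> : (`|N|%:R : algC) * z = ((-1) ^+ (N < 0)%R * z) * N%:~R.
  rewrite -[(`|N|%:R : algC)]/((`|N|%N%:Z)%:~R) abszEsign intrM rmorphXn rmorphN rmorph1.
  ring.
apply: (bM hb) => //; apply: O_mul => //; apply: O_exp => //; apply: O_opp => //; exact: O1.
Qed.

Lemma restrict m (GG GH K : mset m) :
  (forall A, GH A -> GG A) -> is_subgroup GH GH -> (forall A, GG A -> A \in unitmx) ->
  finite_index_subgroup K GG -> finite_index_subgroup (fun A => K A /\ GH A) GH.
Proof.
move=> HG [_ H1 HM HV] uG [[KG K1 KM KV] [s [sG hs]]].
split; first split.
- by move=> A [].
- by split.
- by move=> A B [KA HA] [KB HB]; split; [exact: KM | exact: HM].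
- by move=> A [KA HA]; split; [exact: KV | exact: HV].
have [s' [s'H hs']] : exists s' : seq 'M_m, (forall x, x \in s' -> GH x) /\
    forall h, h \in s -> (exists x, GH x /\ K (invmx h *m x)) ->
      exists2 x, x \in s' & K (invmx h *m x).
  elim: s {sG hs} => [|h0 s [s1 [s1H hs1]]]; first by exists [::]; split.
  case: (classic (exists x, GH x /\ K (invmx h0 *m x))) => [[x0 [Hx0 Kx0]]|nex].
    exists (x0 :: s1); split.
      by move=> h; rewrite inE => /predU1P [->|]; [| exact: s1H].
    move=> h; rewrite inE => /predU1P [-> _|hs ex]; first by exists x0; rewrite ?inE ?eqxx.
    by have [x xs Kx] := hs1 h hs ex; exists x; rewrite ?inE ?xs ?orbT.
  exists s1; split => // h; rewrite inE => /predU1P [-> ex|hs ex]; first by case: (nex ex).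
  exact: hs1.
exists s'; split => // g Hg.
have [h hin hK] := hs g (HG g Hg).
have [x xs xK] := hs' h hin (ex_intro _ g (conj Hg hK)).
have Hx := s'H x xs.
exists x => //; split; last by apply: HM => //; exact: HV.
have uh := uG h (sG h hin); have ux := uG x (HG x Hx).
have -> : invmx x *m g = invmx (invmx h *m x) *m (invmx h *m g).
  rewrite invmxM' ?unitmx_inv // invmxK -mulmxA [h *m _]mulmxA mulmxV // mul1mx //.
by apply: KM => //; exact: KV.
Qed.


Theorem mainTheorem11 (k : algC -> Prop) (m : nat) (G H : mset m) :
  number_field k ->
  linear_k_group k G ->
  linear_k_group k H ->
  (forall A, H A -> G A) ->
  (forall K, finite_index_subgroup K (int_points k H) -> congruence_subgroup k H K) ->
  forall L, is_subgroup L (int_points k H) ->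
    (separable_in L (int_points k H) <-> separable_in L (int_points k G)).
Proof.
move=> hk [sG zG iG] [sH zH iH] HG hcong L sL.
have HGi A : int_points k H A -> int_points k G A by case=> HA OA; split => //; exact: HG.
have sGH := int_points_subgroup hk sH.
have [_ GH1 GHM GHV] := sGH.
have [_ GG1 GGM GGV] := int_points_subgroup hk sG.
have [LH L1 LM LV] := sL.
have Oe A : int_points k G A -> Oent k A by case=> _ [].
have Oi A : int_points k G A -> Oent k (invmx A) by case=> _ [].
have uA A : int_points k G A -> A \in unitmx by case=> _ [].
split; last first.
  move=> sepG g GHg nLg.
  have [K [fK LK nKg]] := sepG g (HGi g GHg) nLg.
  exists (fun A => K A /\ int_points k H A); split.
  - exact: restrict HGi sGH uA fK.
  - by move=> A LA; split; [exact: LK | exact: LH].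
  - by case.
move=> sepH g Gg nLg.
case: (classic (H g)) => [Hg | nHg].
  have GHg : int_points k H g by split => //; case: Gg.
  have [K [fK LK nKg]] := sepH g GHg nLg.
  have [sK [b [hb [x [bx x0]] hPK]]] := hcong K fK.
  have Ox := bO hb bx.
  have [N [N0 [y [Oy hN]]]] := int_in_ideal hk Ox (introN eqP x0).
  have bN : b N%:~R by rewrite hN mulrC; exact: (bM hb Oy bx).
  have [N'0 hN'] := absN hk hb N0 bN.
  have [KH K1 KM KV] := sK.
  have sKG : is_subgroup K (int_points k G) by split => // A KA; apply: HGi; exact: KH.
  have [fK'' PK''] := Lift hk sG N'0 hb hN' sKG.
  exists (congr_lift k G b K); split => //; first by move=> A LA; apply: PK''; exact: LK.
  move=> [_ [h Kh eg]]; apply: nKg.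
  have GHh := KH h Kh.
  have GHhg : int_points k H (invmx h *m g) by apply: GHM => //; exact: GHV.
  have K1' : K (invmx h *m g).
    apply: hPK; split => //.
    have := eqmod_mul hk hb (Oi _ (HGi _ GHh)) (Oe _ Gg) (eqmod_refl _ hb) eg.
    by rewrite mulVmx ?uA //; exact: HGi.
  have := KM _ _ Kh K1'; rewrite mulmxA mulmxV ?mul1mx //; apply: uA; exact: HGi.
have ug : g \in unitmx by exact: uA.
have [S hS] := zH.
have [p [Sp pg]] : exists p, S p /\ mxeval p g <> 0.
  apply: NNPP => hn; apply: nHg; apply/hS; split => // p Sp.
  by apply: NNPP => h; apply: hn; exists p.
have pvan : vanishing_ideal H p by move=> A HA; exact: ((proj1 (hS A) HA).2 p Sp).
have [s [sk svan sgen]] := iH.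
have [q hq] := sgen p pvan.
have [i [ilt fi]] : exists i, (i < size s)%N /\ mxeval s`_i g != 0.
  apply: NNPP => hn; apply: pg; rewrite hq /mxeval raddf_sum /= big1 // => i _.
  rewrite mevalM.
  have : mxeval s`_i g = 0.
    by apply: NNPP => h; apply: hn; exists i; split => //; apply/eqP.
  by rewrite /mxeval => ->; rewrite mulr0.
set f := s`_i.
have fs : f \in s := mem_nth 0 ilt.
have fk := sk f fs.
have fvan := svan f fs.
have [D [D0 hD0]] := denom_seq hk (msupp f) fk.
have hD : forall mo, O k (D%:~R * f@_mo).
  move=> mo; case: (boolP (mo \in msupp f)) => [/hD0 //|/memN_msupp_eq0 ->].
  by rewrite mulr0; exact: O0.
pose F := (D%:~R : algC) *: f.
have FO : forall mo, O k F@_mo by move=> mo; rewrite mcoeffZ.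
have FH : forall A, H A -> mxeval F A = 0.
  by move=> A HA; rewrite /mxeval mevalZ -/(mxeval f A) fvan // mulr0.
set c := mxeval F g.
have c0 : c != 0 by rewrite /c /mxeval mevalZ mulf_neq0 // intr_eq0.
have [Oc _ _] := meval_cong hk (O_ideal hk) FO (Oe g Gg) (Oe g Gg) (eqmod_refl _ (O_ideal hk)).
have O2c : O k (2 * c) by apply: O_mul => //; exact: O_nat.
pose b := fun x => exists y, O k y /\ x = (2 * c) * y.
have hb : Ok_ideal k b.
  split.
  - by move=> x [y [Oy ->]]; exact: O_mul.
  - by exists 0; split; [exact: O0 | rewrite mulr0].
  - move=> x x' [y [Oy ->]] [y' [Oy' ->]]; exists (y + y'); split; first exact: O_add.
    by rewrite mulrDr.
  - move=> r x Or [y [Oy ->]]; exists (r * y); split; first exact: O_mul.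
    by rewrite mulrCA.
have c20 : 2 * c != 0 by rewrite mulf_neq0 // pnatr_eq0.
have [N [N0 [y [Oy hN]]]] := int_in_ideal hk O2c c20.
have bN : b N%:~R by exists y.
have [N'0 hN'] := absN hk hb N0 bN.
have sGHG : is_subgroup (int_points k H) (int_points k G) by split.
have [fK'' PK''] := Lift hk sG N'0 hb hN' sGHG.
exists (congr_lift k G b (int_points k H)); split => //.
  by move=> A LA; apply: PK''; exact: LH.
move=> [_ [h GHh eg]].
have [_ _ bc] := meval_cong hk hb FO (Oe g Gg) (Oe h (HGi h GHh)) eg.
move: bc; rewrite -/c (FH h GHh.1) subr0 => -[z [Oz hz]].
apply: (half_notA Oz.2).
apply: (mulfI c0); rewrite mulr1 [RHS]hz; ring.
Qed.
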